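(* Let $L$ be a finite-dimensional simple Lie algebra, and let $L = L_a \oplus L_b$ be a decomposition of the vector space $L$ into a direct sum of two nonzero subspaces $L_a, L_b$ which is a grading, i.e. for every pair $j,k \in \{a,b\}$ there exists $l \in \{a,b\}$ with $[L_j, L_k] \subseteq L_l$. Then this grading is a $\mathbb{Z}_2$-grading: the labels $a,b$ can be identified with the two elements $0,1$ of the group $\mathbb{Z}_2$ (by a bijection $\{a,b\}\to\mathbb{Z}_2$) in such a way that $[L_i, L_j] \subseteq L_{i+j}$ for all $i,j \in \mathbb{Z}_2$.
   Context: A grading of a Lie algebra $L$ is a decomposition of $L$ as a direct sum of vector subspaces $L_j$, $j\in\mathcal J$, such that for any $j,k\in\mathcal J$ there is $l\in\mathcal J$ with $[L_j,L_k]\subseteq L_l$. A $G$-grading for an abelian group $G$ (written additively) is a decomposition $L=\bigoplus_{i\in G}L_i$ with $[L_i,L_j]\subseteq L_{i+j}$ for all $i,j\in G$. *)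

(* Defs.v *)
From HB Require Import structures.
From mathcomp Require Import all_boot all_order all_algebra.
Set Implicit Arguments. Unset Strict Implicit. Unset Printing Implicit Defensive.
Import GRing.Theory.
Local Open Scope ring_scope.

Definition lie_bracket (K : fieldType) (V : vectType K) (br : V -> V -> V) : Prop :=
  [/\ (forall (c : K) (x y z : V), br (c *: x + y) z = c *: br x z + br y z),
      (forall (c : K) (x y z : V), br x (c *: y + z) = c *: br x y + br x z),
      (forall x : V, br x x = 0)
    & (forall x y z : V, br x (br y z) + br y (br z x) + br z (br x y) = 0)].

Definition bracket_sub (K : fieldType) (V : vectType K) (br : V -> V -> V)
    (A B C : {vspace V}) : Prop :=
  forall x y, x \in A -> y \in B -> br x y \in C.

Definition lie_ideal (K : fieldType) (V : vectType K) (br : V -> V -> V)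
    (I : {vspace V}) : Prop :=
  forall x y, x \in I -> br x y \in I.

Definition simple_lie (K : fieldType) (V : vectType K) (br : V -> V -> V) : Prop :=
  (exists x y : V, br x y != 0) /\
  (forall I : {vspace V}, lie_ideal br I -> I = 0%VS \/ I = fullv).

Inductive ab_label := la | lb.

Definition grade_of (K : fieldType) (V : vectType K) (La Lb : {vspace V})
    (j : ab_label) : {vspace V} :=
  match j with la => La | lb => Lb end.

(* Main.v *)
Require Import Defs.
From HB Require Import structures.
From mathcomp Require Import all_boot all_order all_algebra.
Import GRing.Theory.
Local Open Scope ring_scope.

Section S.
Variables (K : fieldType) (V : vectType K) (br : V -> V -> V).
Hypothesis hl : lie_bracket br.

Lemma br0l z : br 0 z = 0.
Proof.
case: hl => hL _ _ _.
have h := hL 1 0 0 z; rewrite !scale1r addr0 in h.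
by apply: (addrI (br 0 z)); rewrite -h addr0.
Qed.

Lemma br0r z : br z 0 = 0.
Proof.
case: hl => _ hR _ _.
have h := hR 1 z 0 0; rewrite !scale1r addr0 in h.
by apply: (addrI (br z 0)); rewrite -h addr0.
Qed.

Lemma brDl x y z : br (x + y) z = br x z + br y z.
Proof. by case: hl => hL _ _ _; have := hL 1 x y z; rewrite !scale1r. Qed.
Lemma brDr x y z : br z (x + y) = br z x + br z y.
Proof. by case: hl => _ hR _ _; have := hR 1 z x y; rewrite !scale1r. Qed.
Lemma brZl c x z : br (c *: x) z = c *: br x z.
Proof. by case: hl => hL _ _ _; have := hL c x 0 z; rewrite !addr0 br0l addr0. Qed.
Lemma brZr c x z : br z (c *: x) = c *: br z x.
Proof. by case: hl => _ hR _ _; have := hR c z x 0; rewrite !addr0 br0r addr0. Qed.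
Lemma br_anti x y : br y x = - br x y.
Proof.
case: hl => _ _ hxx _.
have := hxx (x + y); rewrite brDl !brDr !hxx add0r addr0 => /eqP.
by rewrite addr_eq0 => /eqP ->; rewrite opprK.
Qed.
Lemma jac x y z : br x (br y z) + br y (br z x) + br z (br x y) = 0.
Proof. by case: hl. Qed.

Definition brl (b : V) := fun x => br x b.
Lemma brl_lin b : linear (brl b).
Proof. by move=> c x y; rewrite /brl brDl brZl. Qed.
HB.instance Definition _ b := GRing.isLinear.Build K V V *:%R (brl b) (brl_lin b).


Lemma in_both {A B : {vspace V}} {x} : directv (A + B) -> x \in A -> x \in B -> x = 0.
Proof. by move=> /directv_addP hd xa xb; apply/eqP; rewrite -memv0 -hd memv_cap xa xb. Qed.

Lemma not_full {A B : {vspace V}} : directv (A + B) -> B != 0%VS -> A != fullv.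
Proof.
move=> hd hB; apply: contra hB => /eqP hA.
rewrite -subv0; apply/subvP => x xb; rewrite memv0; apply/eqP.
by apply: (in_both hd _ xb); rewrite hA memvf.
Qed.

Lemma decomp {A B : {vspace V}} y : (A + B)%VS = fullv ->
  exists2 u, u \in A & exists2 v, v \in B & y = u + v.
Proof. by move=> h; apply/memv_addP; rewrite h memvf. Qed.

Lemma no_ideal (A B : {vspace V}) : simple_lie br -> (A + B)%VS = fullv ->
  directv (A + B) -> A != 0%VS -> B != 0%VS ->
  (forall x y, x \in A -> y \in A -> br x y \in A) ->
  (forall x y, x \in A -> y \in B -> br x y \in A) -> False.
Proof.
move=> [_ hs] hf hd hA hB hAA hAB.
have hI : lie_ideal br A.
  move=> x y xa; have [u ua [v vb ->]] := decomp y hf.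
  by rewrite brDr; apply: rpredD; [apply: hAA | apply: hAB].
case: (hs A hI) => /eqP; first by rewrite (negbTE hA).
by rewrite (negbTE (not_full hd hB)).
Qed.

Definition Cen (A : {vspace V}) :=
  (A :&: \bigcap_(i < \dim A) lker (linfun (brl (vbasis A)`_i)))%VS.

Lemma memC (A : {vspace V}) x :
  x \in Cen A <-> (x \in A /\ forall y, y \in A -> br x y = 0).
Proof.
rewrite /Cen memv_cap; split.
  case/andP => xa; rewrite memvE => /subv_bigcapP H; split => // y ya.
  rewrite (coord_vbasis ya); elim/big_rec: _ => [|i s _ IH]; first by rewrite br0r.
  rewrite brDr brZr IH addr0.
  by have := H i isT; rewrite -memvE memv_ker lfunE /= /brl => /eqP ->; rewrite scaler0.
move=> [xa H]; rewrite xa /= memvE; apply/subv_bigcapP => i _.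
rewrite -memvE memv_ker lfunE /= /brl H //; apply: vbasis_mem; apply: mem_nth.
by rewrite size_tuple.
Qed.

Lemma keyZ (A B : {vspace V}) : simple_lie br -> (A + B)%VS = fullv ->
  directv (A + B) -> B != 0%VS ->
  (forall x y, x \in A -> y \in A -> br x y \in B) ->
  (forall x y, x \in A -> y \in B -> br x y \in A) ->
  (forall x y, x \in B -> y \in B -> br x y \in A) ->
  forall x y, x \in B -> y \in B -> br x y = 0.
Proof.
move=> [_ hs] hf hd hB hAA hAB hBB.
have hBA : forall x y, x \in B -> y \in A -> br x y \in A.
  by move=> x y xb ya; rewrite br_anti rpredN hAB.
have hI : lie_ideal br (Cen A).
  move=> c y /memC [ca hc]; have [u ua [v vb ->]] := decomp y hf.
  rewrite brDr hc // add0r; apply/memC; split; first exact: hAB.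
  move=> x xa; have := jac c v x.
  rewrite (br_anti c x) (hc x xa) oppr0 br0r addr0 (hc _ (hBA _ _ vb xa)) add0r.
  by move=> h; rewrite br_anti h oppr0.
have hC0 : Cen A = 0%VS.
  case: (hs _ hI) => // hC; exfalso; move/negP: (not_full hd hB); apply.
  rewrite eqEsubv subvf /=; apply/subvP => x _.
  by have := memvf x; rewrite -hC => /memC [].
move=> x y xb yb; apply/eqP; rewrite -memv0 -hC0; apply/memC; split; first exact: hBB.
move=> w wa; rewrite br_anti; apply/eqP; rewrite oppr_eq0; apply/eqP.
apply: (in_both hd); last by apply: hAA => //; apply: hBB.
have := jac w x y; move/eqP; rewrite -addrA addr_eq0 => /eqP ->.
by rewrite rpredN; apply: rpredD; apply: (hBA) => //; [apply: (hBA) | apply: (hAB)].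
Qed.
End S.
Lemma zgrad (x0 x1 : ab_label) (P : ab_label -> ab_label -> ab_label -> Prop) :
  x0 <> x1 -> P x0 x0 x0 -> P x0 x1 x1 -> P x1 x0 x1 -> P x1 x1 x0 ->
  exists f : 'Z_2 -> ab_label, bijective f /\ forall i j, P (f i) (f j) (f (i + j)).
Proof.
move=> hx h000 h011 h101 h110.
have Z2 : forall i : 'Z_2, i = 0 \/ i = 1.
  by case=> [[|[|n]] Hi] //; [left|right]; apply/val_inj.
exists (fun i : 'Z_2 => if i == 0 then x0 else x1); split; last first.
  by move=> i j; case: (Z2 i) => ->; case: (Z2 j) => ->.
case: x0 x1 hx {h000 h011 h101 h110} => [] [] // _.
  exists (fun l => match l with la => 0 | lb => 1 end).
    by move=> i; case: (Z2 i) => ->.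
  by case.
exists (fun l => match l with la => 1 | lb => 0 end).
  by move=> i; case: (Z2 i) => ->.
by case.
Qed.

Theorem theorem1 (K : fieldType) (V : vectType K) (br : V -> V -> V)
    (La Lb : {vspace V}) :
  lie_bracket br -> simple_lie br ->
  (La + Lb)%VS = fullv -> directv (La + Lb) ->
  La != 0%VS -> Lb != 0%VS ->
  (forall j k : ab_label, exists l : ab_label,
     bracket_sub br (grade_of La Lb j) (grade_of La Lb k) (grade_of La Lb l)) ->
  exists f : 'Z_2 -> ab_label, bijective f /\
    (forall i j : 'Z_2,
       bracket_sub br (grade_of La Lb (f i)) (grade_of La Lb (f j))
                      (grade_of La Lb (f (i + j)))).
Proof.
move=> hl hs hf hd hA hB hG.
have hf' : (Lb + La)%VS = fullv by rewrite addvC.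
have hd' : directv (Lb + La) by apply/directv_addP; rewrite capvC; apply/directv_addP.
have two : forall j k, bracket_sub br (grade_of La Lb j) (grade_of La Lb k) La \/
                       bracket_sub br (grade_of La Lb j) (grade_of La Lb k) Lb.
  by move=> j k; case: (hG j k) => [[] h]; [left|right].
have anti : forall U W X : {vspace V}, bracket_sub br U W X -> bracket_sub br W U X.
  by move=> U W X h x y xw yu; rewrite (@br_anti K V br hl) rpredN; apply: h.
have zer : forall U W X : {vspace V}, (forall x y, x \in U -> y \in W -> br x y = 0) ->
    bracket_sub br U W X.
  by move=> U W X h x y xu yw; rewrite h // rpred0.
pose P := fun a b c => bracket_sub br (grade_of La Lb a) (grade_of La Lb b) (grade_of La Lb c).
case: (two la la) => /= hAA.
  case: (two la lb) => /= hAB.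
    by exfalso; apply: (@no_ideal K V br hl La Lb hs hf hd hA hB hAA hAB).
  case: (two lb lb) => /= hBB.
    by apply: (@zgrad la lb P); [discriminate | exact: hAA | exact: hAB | exact: (anti _ _ _ hAB) | exact: hBB].
  by exfalso; apply: (@no_ideal K V br hl Lb La hs hf' hd' hB hA hBB (anti _ _ _ hAB)).
case: (two la lb) => /= hAB.
  case: (two lb lb) => /= hBB.
    have z := @keyZ K V br hl La Lb hs hf hd hB hAA hAB hBB.
    by apply: (@zgrad lb la P); [discriminate | exact: (zer _ _ _ z) | exact: (anti _ _ _ hAB) | exact: hAB | exact: hAA].
  by apply: (@zgrad lb la P); [discriminate | exact: hBB | exact: (anti _ _ _ hAB) | exact: hAB | exact: hAA].
case: (two lb lb) => /= hBB.
  have z := @keyZ K V br hl Lb La hs hf' hd' hA hBB (anti _ _ _ hAB) hAA.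
  by apply: (@zgrad la lb P); [discriminate | exact: (zer _ _ _ z) | exact: hAB | exact: (anti _ _ _ hAB) | exact: hBB].
by exfalso; apply: (@no_ideal K V br hl Lb La hs hf' hd' hB hA hBB (anti _ _ _ hAB)).
Qed.
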